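(* Let $k\in\mathbb N$, $E\subseteq W(A)$ and $\vec s\in V^\infty(A)$ such that $E$ is $k$-large in $\vec s$. Then there exists $\vec t\in V^\infty(A)$ with $\vec t\le_k\vec s$ such that $\langle\vec t\,\|\,(A_{k+n})_{n=0}^\infty\rangle_c\subseteq E$.
   Context: $\mathbb N=\{0,1,2,\dots\}$. Fix an increasing sequence $A_0\subseteq A_1\subseteq A_2\subseteq\cdots$ of finite nonempty alphabets and set $A=\bigcup_{n\in\mathbb N}A_n$. $W(A)$ denotes the set of all finite words over $A$, including the empty word; words are concatenated by juxtaposition. Fix a symbol $x\notin A$. A variable word over $A$ is a finite word over $A\cup\{x\}$ in which $x$ occurs at least once; $V(A)$ is the set of variable words. For $s(x)\in V(A)$ and $a\in A\cup\{x\}$, $s(a)$ is obtained by replacing every occurrence of $x$ by $a$. $V^\infty(A)$ is the set of infinite sequences of variable words. For a sequence $(s_n(x))_{n\in I}$ of variable words and a sequence $(B_n)_{n\in I}$ of finite subsets of $A$, both indexed by a set $I\subseteq\mathbb N$ that is either a finite interval or of the form $\{m,m+1,\dots\}$: the constant span $\langle (s_n(x))_{n\in I}\,\|\,(B_n)_{n\in I}\rangle_c$ is the set of all words $s_{l_0}(a_0)s_{l_1}(a_1)\cdots s_{l_j}(a_j)$ with $j\ge0$, $l_0<\dots<l_j$ in $I$ and $a_i\in B_{l_i}$ for each $i$; the variable span $\langle (s_n(x))_{n\in I}\,\|\,(B_n)_{n\in I}\rangle_v$ is the set of all words $s_{l_0}(a_0)\cdots s_{l_j}(a_j)$ with $j\ge0$,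 $l_0<\dots<l_j$ in $I$, $a_i\in B_{l_i}\cup\{x\}$ for each $i$, and at least one $a_i=x$. (E.g. $(A_{k+n})_{n=p}^{q}$ denotes the sequence $B_n=A_{k+n}$, $p\le n\le q$.) Extracted $k$-subsequences: let $k\in\mathbb N$ and $\vec s=(s_n(x))_{n=0}^\infty\in V^\infty(A)$. A finite sequence $(t_n(x))_{n=0}^l$ of variable words is an extracted $k$-subsequence of $\vec s$ if there exist integers $0=m_0<m_1<\dots<m_{l+1}$ with $t_i(x)\in\langle (s_n(x))_{n=m_i}^{m_{i+1}-1}\,\|\,(A_{k+n})_{n=m_i}^{m_{i+1}-1}\rangle_v$ for all $0\le i\le l$. An infinite sequence $\vec t=(t_n(x))_{n=0}^\infty$ is an extracted $k$-subsequence of $\vec s$ if each initial segment $(t_n(x))_{n=0}^l$ is a finite extracted $k$-subsequence of $\vec s$. We write $\vec t\le_k\vec s$. A set $E\subseteq W(A)$ is $k$-large in $\vec s\in V^\infty(A)$ if $E\cap\langle\vec w\,\|\,(A_{k+n})_{n=0}^\infty\rangle_c\neq\emptyset$ for every $\vec w\in V^\infty(A)$ with $\vec w\le_k\vec s$. *)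

(* Defs.v *)
(* Letters live in an arbitrary type T; the alphabets A_n are
   finite lists; the variable symbol x is [None] in [option T]. *)
From Stdlib Require Import List Arith Sorted.
Import ListNotations.

Definition alphabet_seq {T : Type} (A : nat -> list T) : Prop :=
  (forall n, A n <> []) /\ (forall n, incl (A n) (A (S n))).

Definition inA {T : Type} (A : nat -> list T) (a : T) : Prop := exists n, In a (A n).

Definition is_word {T : Type} (A : nat -> list T) (w : list T) : Prop :=
  Forall (inA A) w.

Definition is_vword {T : Type} (A : nat -> list T) (w : list (option T)) : Prop :=
  In None w /\ (forall a, In (Some a) w -> inA A a).

Definition is_vseq {T : Type} (A : nat -> list T) (s : nat -> list (option T)) : Prop :=
  forall n, is_vword A (s n).

Definition csubst {T : Type} (s : list (option T)) (a : T) : list T :=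
  map (fun o => match o with None => a | Some b => b end) s.

Definition vsubst {T : Type} (s : list (option T)) (a : option T) : list (option T) :=
  map (fun o => match o with None => a | Some b => Some b end) s.

Definition cspan {T : Type} (s : nat -> list (option T)) (B : nat -> list T)
  (I : nat -> Prop) (w : list T) : Prop :=
  exists ls : list (nat * T),
    ls <> [] /\
    Sorted (fun p q => fst p < fst q) ls /\
    Forall (fun p => I (fst p) /\ In (snd p) (B (fst p))) ls /\
    w = concat (map (fun p => csubst (s (fst p)) (snd p)) ls).

Definition vspan {T : Type} (s : nat -> list (option T)) (B : nat -> list T)
  (I : nat -> Prop) (w : list (option T)) : Prop :=
  exists ls : list (nat * option T),
    Sorted (fun p q => fst p < fst q) ls /\
    Forall (fun p => I (fst p) /\
              match snd p with None => True | Some a => In a (B (fst p)) end) ls /\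
    (exists p, In p ls /\ snd p = None) /\
    w = concat (map (fun p => vsubst (s (fst p)) (snd p)) ls).

Definition extracted_fin {T : Type} (A : nat -> list T) (k : nat)
  (s t : nat -> list (option T)) (l : nat) : Prop :=
  exists m : nat -> nat,
    m 0 = 0 /\
    (forall i, i <= l -> m i < m (S i)) /\
    (forall i, i <= l ->
       vspan s (fun n => A (k + n)) (fun n => m i <= n < m (S i)) (t i)).

Definition extracted {T : Type} (A : nat -> list T) (k : nat)
  (t s : nat -> list (option T)) : Prop :=
  forall l, extracted_fin A k s t l.

Definition k_large {T : Type} (A : nat -> list T) (k : nat)
  (E : list T -> Prop) (s : nat -> list (option T)) : Prop :=
  forall w, is_vseq A w -> extracted A k w s ->
    exists u, E u /\ cspan w (fun n => A (k + n)) (fun _ => True) u.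

(* Main.v *)
Require Import Defs.
From Stdlib Require Import List Arith Sorted Lia ClassicalEpsilon FunctionalExtensionality PropExtensionality Classical.
From mathcomp Require boolp classical_sets.
From Corelib Require Import ssreflect ssrfun ssrbool.
Import ListNotations.

Lemma zornP (X : Type) (x0 : X) (R : X -> X -> Prop) :
  (forall t, R t t) -> (forall r s t, R r s -> R s t -> R r t) ->
  (forall C : X -> Prop, (forall s t, C s -> C t -> R s t \/ R t s) -> exists t, forall s, C s -> R s t) ->
  exists t, forall s, R t s -> R s t.
Proof.
intros Hr Ht Hc.
destruct (@classical_sets.ZL_preorder X x0 (fun a b => boolp.asbool (R a b))) as [t Ht'].
- intros t. apply/boolp.asboolP. auto.
- intros r s t H1 H2. apply/boolp.asboolP. move/boolp.asboolP: H1. move/boolp.asboolP: H2. eauto.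
- intros C HC. destruct (Hc C) as [t Hct].
  + intros a b Ca Cb. destruct (HC a b Ca Cb) as [H|H]; [left|right]; apply/boolp.asboolP; exact H. 
  + exists t. intros s Cs. apply/boolp.asboolP. auto.
- exists t. intros s Hs. apply/boolp.asboolP. apply Ht'. apply/boolp.asboolP. exact Hs.
Qed.

Definition UF {X : Type} (p : (X -> Prop) -> Prop) : Prop :=
  p (fun _ => True) /\ ~ p (fun _ => False) /\
  (forall P Q : X -> Prop, p P -> (forall x, P x -> Q x) -> p Q) /\
  (forall P Q, p P -> p Q -> p (fun x => P x /\ Q x)) /\
  (forall P, p P \/ p (fun x => ~ P x)).

Section UFs.
Lemma UF_mono {X} (p : (X->Prop)->Prop) P Q : UF p -> p P -> (forall x, P x -> Q x) -> p Q.
Proof. intros (_&_&H&_) ; eauto. Qed.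
Lemma UF_and {X} (p : (X->Prop)->Prop) P Q : UF p -> p P -> p Q -> p (fun x => P x /\ Q x).
Proof. intros (_&_&_&H&_) ; eauto. Qed.
Lemma UF_T {X} (p : (X->Prop)->Prop) : UF p -> p (fun _ => True).
Proof. intros (H&_) ; eauto. Qed.
Lemma UF_ne {X} (p : (X->Prop)->Prop) P : UF p -> p P -> exists x, P x.
Proof. intros Hp HP. apply NNPP; intro N. pose proof Hp as (_&H&_). apply H.
  apply (UF_mono p P); auto. intros x Px; apply N; eauto. Qed.
Lemma UF_or {X} (p : (X->Prop)->Prop) P : UF p -> p P \/ p (fun x => ~ P x).
Proof. intros (_&_&_&_&H) ; eauto. Qed.
Lemma UF_notboth {X} (p : (X->Prop)->Prop) P : UF p -> p P -> p (fun x => ~ P x) -> False.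
Proof. intros Hp H1 H2. destruct (UF_ne p _ Hp (UF_and p _ _ Hp H1 H2)) as [x [a b]]; auto. Qed.
Lemma UF_ext {X} (p q : (X->Prop)->Prop) : UF p -> UF q -> (forall P, p P -> q P) -> p = q.
Proof. intros Hp Hq H. extensionality P. apply propositional_extensionality; split; auto.
  intro HqP. destruct (UF_or p P Hp) as [h|h]; auto. exfalso. eapply (UF_notboth q P); eauto. Qed.
Lemma UF_list {X Y} (p : (X->Prop)->Prop) (l : list Y) (P : Y -> X -> Prop) : UF p ->
  (forall y, In y l -> p (P y)) -> p (fun x => forall y, In y l -> P y x).
Proof. intros Hp. induction l as [|a l IH]; intros H.
  - apply (UF_mono p (fun _ => True)); auto. apply UF_T; auto. intros x _ y [].
  - apply (UF_mono p (fun x => P a x /\ forall y, In y l -> P y x)); auto.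
    apply UF_and; auto. apply H; simpl; auto. apply IH. intros; apply H; simpl; auto.
    intros x [h1 h2] y [<-|hy]; auto. Qed.
End UFs.

Definition FIP {X : Type} (F : (X -> Prop) -> Prop) : Prop :=
  forall l : list (X -> Prop), (forall P, In P l -> F P) -> exists x, forall P, In P l -> P x.

Lemma FIP_mono {X} (F G : (X->Prop)->Prop) : FIP F -> (forall P, G P -> F P) -> FIP G.
Proof. intros H1 H2 l Hl. apply H1. auto. Qed.

Lemma FIP_add {X} (G : (X->Prop)->Prop) (P : X -> Prop) :
  (forall l, (forall Q, In Q l -> G Q) -> exists x, P x /\ forall Q, In Q l -> Q x) ->
  FIP (fun Q => G Q \/ Q = P).
Proof.
intros H l Hl.
assert (exists l0, (forall Q, In Q l0 -> G Q) /\ forall x, P x -> (forall Q, In Q l0 -> Q x) -> forall Q, In Q l -> Q x) as [l0 [h1 h2]].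
{ induction l as [|a l IH].
  - exists []; split; [intros ? []|intros x _ _ ? []].
  - specialize (IH (fun Q hQ => Hl Q (or_intror hQ))). destruct IH as [l0 [h1 h2]].
    destruct (Hl a (or_introl eq_refl)) as [Ga| ->].
    + exists (a :: l0); split. intros Q [<-|hq]; auto.
      intros x Px HQ Q [<-|hq]. apply HQ; simpl; auto. apply h2; auto. intros; apply HQ; simpl; auto.
    + exists l0; split; auto. intros x Px HQ Q [<-|hq]; [auto|eapply h2; eauto]. }
destruct (H l0 h1) as [x [Px Hx]]. exists x. apply h2; auto.
Qed.

Lemma ultra_lemma {X} (F : (X -> Prop) -> Prop) : FIP F -> exists p, UF p /\ forall P, F P -> p P.
Proof.
intros HF.
set (K := fun G : (X->Prop)->Prop => FIP (fun P => G P \/ F P)).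
destruct (zornP ((X->Prop)->Prop) (fun _ => False) (fun G H => K G -> K H /\ forall P, G P -> H P)) as [t0 Ht0].
- intros t h; split; auto.
- intros r s t H1 H2 Kr. destruct (H1 Kr) as [Ks i1]. destruct (H2 Ks) as [Kt i2]. split; auto.
- intros C HC.
  destruct (classic (exists s, C s /\ K s)) as [[s [Cs Ks]]|N].
  + exists (fun P => exists G, C G /\ K G /\ G P). intros s' Cs' Ks'. split.
    * intros l Hl.
      assert (exists G0, C G0 /\ K G0 /\ forall P, In P l -> G0 P \/ F P) as [G0 [_ [KG0 HG0]]].
      { induction l as [|a l IH].
        - exists s; repeat split; auto. intros ? [].
        - specialize (IH (fun Q hQ => Hl Q (or_intror hQ))). destruct IH as [G0 [CG0 [KG0 HG0]]].
          destruct (Hl a (or_introl eq_refl)) as [[G1 [CG1 [KG1 G1a]]]|Fa].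
          + destruct (HC G0 G1 CG0 CG1) as [h|h].
            * destruct (h KG0) as [_ i]. exists G1; repeat split; auto.
              intros P [<-|hP]; auto. destruct (HG0 P hP); auto.
            * destruct (h KG1) as [_ i]. exists G0; repeat split; auto.
              intros P [<-|hP]; auto.
          + exists G0; repeat split; auto. intros P [<-|hP]; auto. }
      apply KG0; auto.
    * intros P hP. exists s'; auto.
  + exists (fun _ => False). intros s' Cs' Ks'. exfalso; apply N; eauto.
- assert (Kt : K t0).
  { apply NNPP; intro N. destruct (Ht0 (fun _ => False)) as [h _].
    intros h; contradiction. apply (FIP_mono F); auto. intros P [[]|h]; auto. contradiction. }
  set (G := fun P => t0 P \/ F P).
  assert (Hmax : forall P, FIP (fun Q => G Q \/ Q = P) -> t0 P).
  { intros P HP. destruct (Ht0 (fun Q => t0 Q \/ Q = P)) as [_ h].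
    intros _; split; auto. apply (FIP_mono _ _ HP). unfold G; intros Q [[h|h]|h]; auto.
    apply (FIP_mono _ _ HP). unfold G; intros Q [[h|h]|h]; auto. apply h; auto. }
  assert (HG : FIP G) by exact Kt.
  assert (Hadd : forall P, (forall l, (forall Q, In Q l -> G Q) -> exists x, P x /\ forall Q, In Q l -> Q x) -> G P).
  { intros P H. left. apply Hmax. apply FIP_add. exact H. }
  exists G. split; [|intros P hP; right; auto].
  split; [|split; [|split; [|split]]].
  + apply Hadd. intros l Hl. destruct (HG l Hl) as [x hx]; eauto.
  + intro H. destruct (HG ((fun _ : X => False) :: nil)) as [x hx]. intros Q [<-|[]]; auto. apply (hx _ (or_introl eq_refl)).
  + intros P Q GP PQ. apply Hadd. intros l Hl. destruct (HG (P :: l)) as [x hx].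
    intros R [<-|hR]; auto. exists x; split; [apply PQ, hx; simpl; auto|intros; apply hx; simpl; auto].
  + intros P Q GP GQ. apply Hadd. intros l Hl. destruct (HG (P :: Q :: l)) as [x hx].
    intros R [<-|[<-|hR]]; auto. exists x; split; [split; apply hx; simpl; auto|intros; apply hx; simpl; auto].
  + intros P. apply NNPP; intro N. apply not_or_and in N as [N1 N2].
    assert (N1' : ~ (forall l, (forall Q, In Q l -> G Q) -> exists x, P x /\ forall Q, In Q l -> Q x)) by (intro h; apply N1, Hadd, h).
    assert (N2' : ~ (forall l, (forall Q, In Q l -> G Q) -> exists x, ~ P x /\ forall Q, In Q l -> Q x)) by (intro h; apply N2, Hadd, h).
    apply N1'. intros l1 Hl1. apply NNPP; intro M1. apply N2'. intros l2 Hl2.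
    destruct (HG (l1 ++ l2)) as [x hx]. intros Q hQ; apply in_app_or in hQ as [h|h]; auto.
    exists x; split; [|intros; apply hx, in_or_app; auto].
    intro Px. apply M1. exists x; split; auto. intros; apply hx, in_or_app; auto.
Qed.

Definition mul {X : Type} (op : X -> X -> X) (p q : (X -> Prop) -> Prop) : (X -> Prop) -> Prop :=
  fun P => p (fun f => q (fun g => P (op f g))).

Lemma UF_mul {X} op (p q : (X->Prop)->Prop) : UF p -> UF q -> UF (mul op p q).
Proof.
intros Hp Hq. unfold mul. split; [|split; [|split; [|split]]].
- apply (UF_mono p (fun _ => True)); [exact Hp|exact (UF_T p Hp)|]. intros f _. exact (UF_T q Hq).
- intro H. destruct (UF_ne p _ Hp H) as [f hf]. destruct Hq as (_&h&_). auto.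
- intros P Q HP PQ. apply (UF_mono p _ _ Hp HP). intros f hf. apply (UF_mono q _ _ Hq hf). auto.
- intros P Q HP HQ. apply (UF_mono p _ _ Hp (UF_and p _ _ Hp HP HQ)). intros f [h1 h2]. apply (UF_and q _ _ Hq h1 h2).
- intros P. destruct (UF_or p (fun f => q (fun g => P (op f g))) Hp) as [h|h]; [left; auto|right].
  apply (UF_mono p _ _ Hp h). intros f hf. destruct (UF_or q (fun g => P (op f g)) Hq) as [h'|h']; [contradiction|auto].
Qed.

Lemma mul_assoc {X} (op : X -> X -> X) (p q r : (X->Prop)->Prop) : (forall a b c, op (op a b) c = op a (op b c)) ->
  mul op (mul op p q) r = mul op p (mul op q r).
Proof. intros Ha. unfold mul. extensionality P. f_equal. extensionality f. f_equal. extensionality g. f_equal. extensionality h. rewrite Ha. reflexivity. Qed.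

Definition closed {X : Type} (Y : ((X->Prop)->Prop) -> Prop) : Prop :=
  (forall y, Y y -> UF y) /\ (forall r, UF r -> (forall P, (forall y, Y y -> y P) -> r P) -> Y r).

Lemma closed_inter {X} (Y Z : ((X->Prop)->Prop) -> Prop) : closed Y -> closed Z -> closed (fun r => Y r /\ Z r).
Proof.
intros [h1 h2] [h3 h4]. split. intros y [a b]; auto.
intros r Hr H. split; [apply h2|apply h4]; try exact Hr; intros P HP; apply H; intros y [a b]; first [apply HP; exact a | apply HP; exact b].
Qed.

Lemma chain_inter {X} (C : (((X->Prop)->Prop)->Prop)->Prop) :
  (forall Y, C Y -> closed Y /\ exists y, Y y) ->
  (forall Y Z, C Y -> C Z -> (forall r, Y r -> Z r) \/ (forall r, Z r -> Y r)) ->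
  (exists Y, C Y) ->
  closed (fun r => forall Y, C Y -> Y r) /\ exists r, forall Y, C Y -> Y r.
Proof.
intros HC Hch [Y0 CY0]. split.
- split. intros y Hy. apply (proj1 (proj1 (HC Y0 CY0))). exact (Hy Y0 CY0).
  intros r Hr H Y CY. apply (proj2 (proj1 (HC Y CY))); auto. intros P HP. apply H. intros y Hy. apply HP, Hy, CY.
- destruct (ultra_lemma (fun P => exists Y, C Y /\ forall y, Y y -> y P)) as [r [Hr Hr2]].
  + intros l Hl.
    assert (exists Y, C Y /\ forall P, In P l -> forall y, Y y -> y P) as [Y [CY HY]].
    { induction l as [|a l IH].
      - exists Y0; split; auto. intros ? [].
      - specialize (IH (fun Q hQ => Hl Q (or_intror hQ))). destruct IH as [Y [CY HY]].
        destruct (Hl a (or_introl eq_refl)) as [Z [CZ HZ]].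
        destruct (Hch Y Z CY CZ) as [i|i].
        + exists Y; split; [exact CY|]. intros P [<-|hP] y Yy; [apply HZ, i, Yy| apply (HY P hP y Yy)].
        + exists Z; split; [exact CZ|]. intros P [<-|hP] y Zy; [apply HZ, Zy| apply (HY P hP y (i y Zy))]. }
    destruct (proj2 (HC Y CY)) as [y Yy].
    apply (UF_ne y). apply (proj1 (proj1 (HC Y CY))); auto.
    apply (UF_list y l (fun P x => P x)). apply (proj1 (proj1 (HC Y CY))); auto.
    intros P hP; apply HY; auto.
  + exists r. intros Y CY. apply (proj2 (proj1 (HC Y CY))); auto. intros P HP. apply Hr2. eauto.
Qed.

Lemma closed_mulr {X} (op : X -> X -> X) (Y : ((X->Prop)->Prop)->Prop) p : closed Y -> UF p ->
  closed (fun r => exists y, Y y /\ r = mul op y p).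
Proof.
intros [HY1 HY2] Hp. split.
- intros r [y [Yy ->]]. apply UF_mul; auto.
- intros r Hr H.
  destruct (ultra_lemma (fun P => (forall y, Y y -> y P) \/ exists B, r B /\ P = (fun f => p (fun g => B (op f g))))) as [x [Hx Hx2]].
  + intros l Hl.
    assert (exists F0 B0, (forall y, Y y -> y F0) /\ r B0 /\ forall f, F0 f -> p (fun g => B0 (op f g)) -> forall P, In P l -> P f) as [F0 [B0 [h1 [h2 h3]]]].
    { induction l as [|a l IH].
      - exists (fun _ => True), (fun _ => True). split; [intros y Hy; apply UF_T, HY1, Hy|split; [apply UF_T, Hr|]]. intros f _ _ ? [].
      - specialize (IH (fun Q hQ => Hl Q (or_intror hQ))). destruct IH as [F0 [B0 [h1 [h2 h3]]]].
        destruct (Hl a (or_introl eq_refl)) as [ha|[B [rB ->]]].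
        + exists (fun f => F0 f /\ a f), B0. split; [|split; [exact h2|]].
          * intros y Hy. apply UF_and; [apply HY1; exact Hy|apply h1; exact Hy|apply ha; exact Hy].
          * intros f [i1 i2] i3 P [<-|hP]; [exact i2|exact (h3 f i1 i3 P hP)].
        + exists F0, (fun x => B0 x /\ B x). split; [exact h1|]. split. apply UF_and; auto.
          intros f i1 i3 P [<-|hP].
          * apply (UF_mono p _ _ Hp i3). intros g [_ i]; exact i.
          * apply (h3 f i1); auto. apply (UF_mono p _ _ Hp i3). intros g [i _]; exact i. }
    apply NNPP; intro N. apply (UF_notboth r B0 Hr h2). apply H.
    intros z [y [Yy ->]]. unfold mul. apply (UF_mono y F0); [apply HY1, Yy|apply h1, Yy|].
    intros f Ff. destruct (UF_or p (fun g => B0 (op f g)) Hp) as [i|i]; [|exact i].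
    exfalso; apply N. exists f. exact (h3 f Ff i).
  + exists x. split.
    * apply HY2; [exact Hx|]. intros P HP; apply Hx2; left; exact HP.
    * apply UF_ext; [exact Hr|apply UF_mul; assumption|]. intros P rP. apply Hx2. right. exists P; split; [exact rP|reflexivity].
Qed.

Lemma closed_fix {X} (op : X -> X -> X) (Y : ((X->Prop)->Prop)->Prop) p z : closed Y -> UF p -> UF z ->
  closed (fun y => Y y /\ mul op y p = z).
Proof.
intros [HY1 HY2] Hp Hz. split.
- intros y [Yy _]; apply HY1, Yy.
- intros r Hr H. split.
  + apply HY2; [exact Hr|]. intros P HP. apply H. intros y [Yy _]; apply HP, Yy.
  + symmetry. apply UF_ext; [exact Hz|apply UF_mul; assumption|]. intros P zP. apply (H (fun f => p (fun g => P (op f g)))).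
    intros y [Yy e]. change (mul op y p P). rewrite e; exact zP.
Qed.

Lemma min_closed {X} (K : (((X->Prop)->Prop)->Prop) -> Prop) (Y0 : ((X->Prop)->Prop)->Prop) :
  closed Y0 -> (exists y, Y0 y) -> K Y0 ->
  (forall C, (forall Y, C Y -> closed Y /\ (exists y, Y y) /\ K Y) ->
     (forall Y Z, C Y -> C Z -> (forall r, Y r -> Z r) \/ (forall r, Z r -> Y r)) ->
     (exists Y, C Y) -> K (fun r => forall Y, C Y -> Y r)) ->
  exists M, closed M /\ (exists y, M y) /\ K M /\ (forall r, M r -> Y0 r) /\
    forall Y, closed Y -> (exists y, Y y) -> K Y -> (forall r, Y r -> M r) -> forall r, M r -> Y r.
Proof.
intros HY0 [y0 Hy0] KY0 HK.
set (Kt := fun Y : ((X->Prop)->Prop)->Prop => closed Y /\ (exists y, Y y) /\ K Y /\ forall r, Y r -> Y0 r).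
destruct (zornP _ Y0 (fun Y Z => Kt Y -> Kt Z /\ forall r, Z r -> Y r)) as [t0 Ht0].
- intros t h; split; auto.
- intros r s t H1 H2 Kr. destruct (H1 Kr) as [Ks i1]. destruct (H2 Ks) as [Kt' i2]. split; auto.
- intros C HC. destruct (classic (exists s, C s /\ Kt s)) as [[s [Cs Ks]]|N].
  + set (C' := fun Y => C Y /\ Kt Y).
    assert (HC' : forall Y, C' Y -> closed Y /\ (exists y, Y y) /\ K Y).
    { intros Y [_ (a&b&c&_)]; auto. }
    assert (Hch : forall Y Z, C' Y -> C' Z -> (forall r, Y r -> Z r) \/ (forall r, Z r -> Y r)).
    { intros Y Z [CY KY] [CZ KZ]. destruct (HC Y Z CY CZ) as [h|h]; [right; apply (h KY)|left; apply (h KZ)]. }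
    assert (HCp : forall Y, C' Y -> closed Y /\ exists y, Y y).
    { intros Y hY; destruct (HC' Y hY) as [a [b _]]; split; assumption. }
    destruct (chain_inter C' HCp Hch (ex_intro _ s (conj Cs Ks))) as [cl ne].
    exists (fun r => forall Y, C' Y -> Y r). intros s' Cs' Ks'. split.
    * split; [exact cl|]. split; [exact ne|]. split.
      -- apply HK; [exact HC'|exact Hch|exists s; exact (conj Cs Ks)].
      -- intros r hr. pose proof Ks as (_&_&_&i). apply i, hr. exact (conj Cs Ks).
    * intros r hr; apply hr; exact (conj Cs' Ks').
  + exists Y0. intros s Cs Ks. exfalso; apply N; eauto.
- assert (KtY0 : Kt Y0) by (split; [exact HY0|split; [exists y0; exact Hy0|split; [exact KY0|intros r h; exact h]]]).
  assert (Kt0 : Kt t0).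
  { apply NNPP; intro N. destruct (Ht0 Y0 (fun h => False_ind _ (N h)) KtY0) as [h _]. exact (N h). }
  destruct Kt0 as (c1&c2&c3&c4).
  exists t0. split; [exact c1|split; [exact c2|split; [exact c3|split; [exact c4|]]]].
  intros Y cY nY KY sub.
  assert (KtY : Kt Y) by (split; [exact cY|split; [exact nY|split; [exact KY|intros r Yr; apply c4, sub, Yr]]]).
  destruct (Ht0 Y (fun _ => conj KtY sub) KtY) as [_ h]. exact h.
Qed.

Lemma ellis {X} (op : X -> X -> X) (Hass : forall a b c, op (op a b) c = op a (op b c)) (Y0 : ((X->Prop)->Prop)->Prop) :
  closed Y0 -> (exists y, Y0 y) -> (forall x y, Y0 x -> Y0 y -> Y0 (mul op x y)) -> exists e, Y0 e /\ mul op e e = e.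
Proof.
intros cY0 nY0 sY0.
destruct (min_closed (fun Y => forall x y, Y x -> Y y -> Y (mul op x y)) Y0) as [M (cM & [p Mp] & sM & MY0 & minM)]; auto.
{ intros C HC _ _ x y hx hy Y CY. destruct (HC Y CY) as (_&_&KY). apply KY; [apply hx, CY|apply hy, CY]. }
assert (Hp : UF p) by (apply (proj1 cM); auto).
assert (H1 : forall r, M r -> exists y, M y /\ r = mul op y p).
{ apply minM; auto.
  - apply closed_mulr; auto.
  - exists (mul op p p); eauto.
  - intros x y [y1 [My1 ->]] [y2 [My2 ->]]. exists (mul op (mul op y1 p) y2). split; auto.
    rewrite !mul_assoc; auto.
  - intros r [y [My ->]]; auto. }
destruct (H1 p Mp) as [m [Mm em]].
assert (H2 : forall r, M r -> M r /\ mul op r p = p).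
{ apply minM; auto.
  - apply closed_fix; auto.
  - exists m; split; auto.
  - intros x y [Mx ex] [My ey]. split; auto. rewrite mul_assoc; auto. rewrite ey; auto.
  - intros r [h _]; auto. }
exists p. split; auto. apply H2; auto.
Qed.

Lemma min_idem {X} (op : X -> X -> X) (Hass : forall a b c, op (op a b) c = op a (op b c)) (Y0 : ((X->Prop)->Prop)->Prop) :
  closed Y0 -> (exists y, Y0 y) -> (forall x y, Y0 x -> Y0 y -> Y0 (mul op x y)) ->
  exists p, Y0 p /\ mul op p p = p /\ forall r, Y0 r -> mul op r r = r -> mul op p r = r -> mul op r p = r -> r = p.
Proof.
intros cY0 nY0 sY0.
destruct (min_closed (fun Y => forall x y, Y0 x -> Y y -> Y (mul op x y)) Y0) as [M (cM & nM & sM & MY0 & minM)]; auto.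
{ intros C HC _ _ x y hx hy Y CY. destruct (HC Y CY) as (_&_&KY). apply KY; [exact hx|apply hy, CY]. }
destruct (ellis op Hass M) as [p [Mp pp]]; auto.
exists p. split; auto. split; auto. intros r Y0r rr pr rp.
assert (Mr : M r) by (rewrite <- rp; auto).
assert (Hr : UF r) by (apply (proj1 cM); auto).
assert (H1 : forall z, M z -> exists y, Y0 y /\ z = mul op y r).
{ apply minM; auto.
  - apply closed_mulr; auto.
  - exists (mul op r r); eauto.
  - intros x z hx [y [Y0y ->]]. exists (mul op x y). split; auto. rewrite mul_assoc; auto.
  - intros z [y [Y0y ->]]; auto. }
destruct (H1 p Mp) as [y [Y0y ey]].
rewrite -pr {1}ey mul_assoc; [|exact Hass]. rewrite rr. symmetry; exact ey.
Qed.

Lemma below {X} (op : X -> X -> X) (Hass : forall a b c, op (op a b) c = op a (op b c)) (S0 V0 : ((X->Prop)->Prop)->Prop) p :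
  closed S0 -> closed V0 -> S0 p -> mul op p p = p ->
  (forall x y, S0 x -> S0 y -> S0 (mul op x y)) ->
  (forall x y, S0 x -> V0 y -> V0 (mul op x y)) ->
  (forall x y, V0 x -> S0 y -> V0 (mul op x y)) ->
  (forall x, V0 x -> S0 x) -> (exists v, V0 v) ->
  exists q, V0 q /\ mul op q q = q /\ mul op p q = q /\ mul op q p = q.
Proof.
intros cS cV Sp pp sS sSV sVS VS [v Vv].
assert (Hp : UF p) by (apply (proj1 cS); auto).
set (Y1 := fun r => (exists w, S0 w /\ r = mul op w p) /\ V0 r).
assert (c1 : closed Y1). { apply closed_inter; [apply closed_mulr; assumption|exact cV]. }
assert (n1 : exists r, Y1 r).
{ exists (mul op v p). split; [exists v; split; [apply VS, Vv|reflexivity]|apply sVS; [exact Vv|exact Sp]]. }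
assert (s1 : forall x y, Y1 x -> Y1 y -> Y1 (mul op x y)).
{ intros x y [[w1 [S1 ->]] V1] [[w2 [S2 ->]] V2]. split.
  + exists (mul op (mul op w1 p) w2). split. apply sS; [apply sS; assumption|exact S2]. rewrite !mul_assoc; try exact Hass. reflexivity.
  + apply sVS; [exact V1|apply VS, V2]. }
destruct (ellis op Hass Y1 c1 n1 s1) as [e [[[w [Sw ew]] Ve] ee]].
assert (ep : mul op e p = e).
  { rewrite ew mul_assoc; [|exact Hass]. rewrite pp. reflexivity. }
exists (mul op p e). split; [apply sSV; [exact Sp|exact Ve]|]. split; [|split].
+ rewrite (mul_assoc op p e); [|exact Hass]. rewrite <- (mul_assoc op e p e); [|exact Hass]. rewrite ep ee; reflexivity.
+ rewrite <- mul_assoc; [|exact Hass]. rewrite pp; reflexivity.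
+ rewrite mul_assoc; [|exact Hass]. rewrite ep; reflexivity.
Qed.

Definition ub {T : Type} (f : list (nat * option T)) : nat :=
  fold_right (fun pr m => Nat.max (S (fst pr)) m) 0 f.

Definition opw {T : Type} (f g : list (nat * option T)) : list (nat * option T) :=
  f ++ filter (fun pr => Nat.leb (ub f) (fst pr)) g.

Lemma ub_cons {T} (x : nat * option T) f : ub (x :: f) = Nat.max (S (fst x)) (ub f).
Proof. reflexivity. Qed.
Lemma ub_nil {T} : ub (@nil (nat * option T)) = 0.
Proof. reflexivity. Qed.

Lemma ub_app {T} (f g : list (nat * option T)) : ub (f ++ g) = Nat.max (ub f) (ub g).
Proof. induction f as [|x f IH]; [reflexivity|]. rewrite <- app_comm_cons, !ub_cons, IH. lia. Qed.

Lemma ub_filter_le {T} u (g : list (nat * option T)) : ub (filter (fun pr => Nat.leb u (fst pr)) g) <= ub g.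
Proof. induction g as [|x g IH]; [simpl; lia|]. cbn [filter]. destruct (Nat.leb u (fst x)); rewrite ?ub_cons; lia. Qed.

Lemma ub_filter_ge {T} u (g : list (nat * option T)) : ub g <= Nat.max u (ub (filter (fun pr => Nat.leb u (fst pr)) g)).
Proof. induction g as [|x g IH]; [simpl; lia|]. cbn [filter]. destruct (Nat.leb u (fst x)) eqn:E; rewrite ?ub_cons.
  - lia.
  - apply Nat.leb_gt in E. lia. Qed.

Lemma in_ub {T} (f : list (nat * option T)) pr : In pr f -> fst pr < ub f.
Proof. induction f as [|x f IH]; [intros []|]. intros [<-|h]; rewrite ub_cons; [lia|]. specialize (IH h); lia. Qed.

Lemma filter_filter_nat {T} u v (h : list (nat * option T)) :
  filter (fun pr => Nat.leb u (fst pr)) (filter (fun pr => Nat.leb v (fst pr)) h) =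
  filter (fun pr => Nat.leb (Nat.max u v) (fst pr)) h.
Proof. induction h as [|x h IH]; simpl; [reflexivity|].
  destruct (Nat.leb v (fst x)) eqn:E1; destruct (Nat.leb (Nat.max u v) (fst x)) eqn:E2; simpl;
  try destruct (Nat.leb u (fst x)) eqn:E3; rewrite ?IH; try reflexivity;
  repeat match goal with H : Nat.leb _ _ = true |- _ => apply Nat.leb_le in H | H : Nat.leb _ _ = false |- _ => apply Nat.leb_gt in H end; lia.
Qed.

Lemma filter_ext_nat {T} (P Q : nat * option T -> bool) (h : list (nat * option T)) :
  (forall x, P x = Q x) -> filter P h = filter Q h.
Proof. intros H. induction h as [|x h IH]; simpl; [reflexivity|]. rewrite H IH. reflexivity. Qed.

Lemma opw_assoc {T} (f g h : list (nat * option T)) : opw (opw f g) h = opw f (opw g h).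
Proof.
unfold opw. rewrite <- app_assoc. f_equal. rewrite filter_app. f_equal.
rewrite filter_filter_nat ub_app. apply filter_ext_nat. intros x.
pose proof (ub_filter_le (ub f) g). pose proof (ub_filter_ge (ub f) g).
destruct (Nat.leb (Nat.max (ub f) (ub (filter (fun pr => Nat.leb (ub f) (fst pr)) g))) (fst x)) eqn:E1;
destruct (Nat.leb (Nat.max (ub f) (ub g)) (fst x)) eqn:E2; try reflexivity;
repeat match goal with H : Nat.leb _ _ = true |- _ => apply Nat.leb_le in H | H : Nat.leb _ _ = false |- _ => apply Nat.leb_gt in H end; lia.
Qed.

Definition tl {T : Type} (n : nat) (f : list (nat * option T)) : Prop := Forall (fun pr => n <= fst pr) f.

Lemma opw_tl {T} (f g : list (nat * option T)) : tl (ub f) g -> opw f g = f ++ g.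
Proof. intros H. unfold opw. f_equal. induction H as [|x g hx hg IH]; simpl; [reflexivity|].
  apply Nat.leb_le in hx. rewrite hx IH. reflexivity. Qed.

Lemma Forall_filter {X} (P : X -> Prop) (b : X -> bool) l : Forall P l -> Forall P (filter b l).
Proof. intros H. induction H; simpl; [constructor|]. destruct (b x); auto. Qed.

Lemma opw_tl_pres {T} n (f g : list (nat * option T)) : tl n f -> tl n g -> tl n (opw f g).
Proof. intros h1 h2. unfold opw, tl. apply Forall_app; split; [exact h1|apply Forall_filter, h2]. Qed.

Definition sig {T : Type} (a : T) (f : list (nat * option T)) : list (nat * option T) :=
  map (fun pr => (fst pr, Some (match snd pr with None => a | Some b => b end))) f.

Lemma ub_sig {T} (a : T) f : ub (sig a f) = ub f.
Proof. induction f as [|x f IH]; [reflexivity|]. unfold sig; rewrite map_cons ub_cons; fold (sig a f). rewrite IH ub_cons. reflexivity. Qed.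

Lemma sig_opw {T} (a : T) f g : sig a (opw f g) = opw (sig a f) (sig a g).
Proof. unfold opw, sig. rewrite map_app. f_equal. fold (sig a f). rewrite ub_sig.
  induction g as [|x g IH]; simpl; [reflexivity|]. destruct (Nat.leb (ub f) (fst x)); simpl; rewrite IH; reflexivity. Qed.

Definition isC {T : Type} (f : list (nat * option T)) : Prop := Forall (fun pr => snd pr <> None) f.
Definition isV {T : Type} (f : list (nat * option T)) : Prop := exists pr, In pr f /\ snd pr = None.

Lemma sig_C {T} (a : T) f : isC f -> sig a f = f.
Proof. intros H. induction H as [|[n o] f hx hf IH]; simpl; [reflexivity|]. rewrite IH.
  destruct o; [reflexivity|simpl in hx; contradiction]. Qed.

Lemma isC_sig {T} (a : T) f : isC (sig a f).
Proof. unfold isC, sig. apply Forall_map. apply Forall_forall. intros x _; simpl; discriminate. Qed.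

Lemma tl_sig {T} (a : T) n f : tl n f -> tl n (sig a f).
Proof. unfold tl, sig. intros H. apply Forall_map. exact H. Qed.

Lemma isC_opw {T} (f g : list (nat * option T)) : isC f -> isC g -> isC (opw f g).
Proof. intros h1 h2. unfold opw, isC. apply Forall_app; split; [exact h1|apply Forall_filter, h2]. Qed.

Lemma isV_opwl {T} (f g : list (nat * option T)) : isV f -> isV (opw f g).
Proof. intros [pr [h1 h2]]. exists pr. split; [unfold opw; apply in_or_app; left; exact h1|exact h2]. Qed.

Lemma isV_opwr {T} (f g : list (nat * option T)) : isV g -> tl (ub f) g -> isV (opw f g).
Proof. intros [pr [h1 h2]] ht. rewrite opw_tl; [|exact ht]. exists pr. split; [apply in_or_app; right; exact h1|exact h2]. Qed.

Lemma SS_app {X} (R : X -> X -> Prop) l1 l2 : StronglySorted R l1 -> StronglySorted R l2 ->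
  (forall x y, In x l1 -> In y l2 -> R x y) -> StronglySorted R (l1 ++ l2).
Proof. intros h1 h2 h3. induction h1 as [|a l1 hl1 IH hal]; simpl; [exact h2|].
  constructor. apply IH. intros; apply h3; simpl; auto.
  apply Forall_app; split; [exact hal|]. apply Forall_forall. intros y hy; apply h3; simpl; auto. Qed.

Lemma SS_app_inv {X} (R : X -> X -> Prop) l1 l2 : StronglySorted R (l1 ++ l2) ->
  StronglySorted R l1 /\ StronglySorted R l2 /\ (forall x y, In x l1 -> In y l2 -> R x y).
Proof. induction l1 as [|a l1 IH]; simpl; intros H.
  - split; [constructor|split; [exact H|intros ? ? []]].
  - inversion H as [|? ? H1 H2]; subst. destruct (IH H1) as [i1 [i2 i3]]. split; [|split; [exact i2|]].
    + constructor; [exact i1|]. apply Forall_forall. intros x hx. rewrite Forall_forall in H2. apply H2, in_or_app; left; exact hx.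
    + intros x y [<-|hx] hy; [|apply i3; assumption]. rewrite Forall_forall in H2. apply H2, in_or_app; right; exact hy. Qed.

Lemma SS_map {X Y} (R : X -> X -> Prop) (R' : Y -> Y -> Prop) (h : X -> Y) l :
  StronglySorted R l -> (forall x y, R x y -> R' (h x) (h y)) -> StronglySorted R' (map h l).
Proof. intros H HR. induction H as [|a l hl IH hal]; simpl; constructor; [exact IH|].
  apply Forall_map. eapply Forall_impl; [|exact hal]. intros y; apply HR. Qed.

Lemma A_mono {T} (A : nat -> list T) (hA : alphabet_seq A) i j a : i <= j -> In a (A i) -> In a (A j).
Proof. intros hij. induction hij as [|j hij IH]; auto. intros h. apply (proj2 hA j). apply IH, h. Qed.

Definition valid {T : Type} (A : nat -> list T) (k : nat) (f : list (nat * option T)) : Prop :=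
  f <> [] /\ StronglySorted (fun p q => fst p < fst q) f /\
  Forall (fun pr => match snd pr with None => True | Some a => In a (A (k + fst pr)) end) f.

Lemma valid_opw {T} (A : nat -> list T) k f g : valid A k f -> valid A k g -> tl (ub f) g -> valid A k (opw f g).
Proof. intros [n1 [s1 l1]] [n2 [s2 l2]] ht. rewrite opw_tl; [|exact ht]. split; [|split].
  - destruct f; [contradiction|discriminate].
  - apply SS_app; auto. intros x y hx hy. apply in_ub in hx. unfold tl in ht. rewrite Forall_forall in ht.
    specialize (ht y hy). lia.
  - apply Forall_app; split; assumption. Qed.

Lemma valid_sig {T} (A : nat -> list T) (hA : alphabet_seq A) k j a f : In a (A j) -> valid A k f -> tl j f -> valid A k (sig a f).
Proof. intros ha [n1 [s1 l1]] ht. split; [|split].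
  - destruct f; [contradiction|discriminate].
  - unfold sig. eapply SS_map; [exact s1|]. intros x y; simpl; auto.
  - unfold sig. apply Forall_map. unfold tl in ht. rewrite Forall_forall in ht. rewrite Forall_forall in l1.
    apply Forall_forall. intros x hx. simpl. specialize (ht x hx). specialize (l1 x hx).
    destruct (snd x); [exact l1|]. apply (A_mono A hA j); [lia|exact ha]. Qed.

Definition Cl {X : Type} (F : (X -> Prop) -> Prop) (r : (X -> Prop) -> Prop) : Prop := UF r /\ forall P, F P -> r P.
Lemma closed_Cl {X} (F : (X -> Prop) -> Prop) : closed (Cl F).
Proof. split. intros y [h _]; exact h. intros r Hr H. split; [exact Hr|]. intros P FP. apply H. intros y [_ h]. apply h, FP. Qed.

Definition FS {T : Type} (A : nat -> list T) k (P : list (nat * option T) -> Prop) : Prop :=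
  P = valid A k \/ exists n, P = tl n.
Definition famC {T : Type} (A : nat -> list T) k (P : list (nat * option T) -> Prop) : Prop := FS A k P \/ P = isC.
Definition famV {T : Type} (A : nat -> list T) k (P : list (nat * option T) -> Prop) : Prop := FS A k P \/ P = isV.

Lemma mul_in {X} (op : X -> X -> X) p q (P Xs : X -> Prop) (Y : X -> X -> Prop) : UF p -> UF q -> p Xs ->
  (forall f, Xs f -> q (Y f)) -> (forall f g, Xs f -> Y f g -> P (op f g)) -> mul op p q P.
Proof. intros Hp Hq HX HY H. unfold mul. apply (UF_mono p Xs); [exact Hp|exact HX|]. intros f hf.
  apply (UF_mono q (Y f)); [exact Hq|apply HY, hf|]. intros g hg. apply H; assumption. Qed.


Lemma FS_mul {T} (A : nat -> list T) k p q P : UF p -> UF q -> (forall P, FS A k P -> p P) -> (forall P, FS A k P -> q P) ->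
  FS A k P -> mul opw p q P.
Proof. intros Hp Hq HP HQ [->|[n ->]].
  - apply (mul_in opw p q _ (valid A k) (fun f g => valid A k g /\ tl (ub f) g)); try assumption.
    + apply HP; left; reflexivity.
    + intros f _. apply UF_and; [exact Hq|apply HQ; left; reflexivity|apply HQ; right; eexists; reflexivity].
    + intros f g hf [hg ht]. apply (valid_opw A k); assumption.
  - apply (mul_in opw p q _ (tl n) (fun f g => tl n g)); try assumption.
    + apply HP; right; eexists; reflexivity.
    + intros f _. apply HQ; right; eexists; reflexivity.
    + intros f g hf hg. apply opw_tl_pres; assumption.
Qed.

Lemma dS_mul {T} (A : nat -> list T) k p q : Cl (FS A k) p -> Cl (FS A k) q -> Cl (FS A k) (mul opw p q).
Proof. intros [Hp HP] [Hq HQ]. split; [apply UF_mul; assumption|]. intros P hP. apply (FS_mul A k); assumption. Qed.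

Lemma dC_mul {T} (A : nat -> list T) k p q : Cl (famC A k) p -> Cl (famC A k) q -> Cl (famC A k) (mul opw p q).
Proof. intros [Hp HP] [Hq HQ]. split; [apply UF_mul; assumption|]. intros P [hP| ->].
  - apply (FS_mul A k); try assumption; [intros; apply HP; left; assumption|intros; apply HQ; left; assumption].
  - apply (mul_in opw p q _ isC (fun f g => isC g)); try assumption.
    + apply HP; right; reflexivity.
    + intros f _. apply HQ; right; reflexivity.
    + intros f g hf hg. apply isC_opw; assumption.
Qed.

Lemma dV_mul_l {T} (A : nat -> list T) k p q : Cl (famV A k) p -> Cl (FS A k) q -> Cl (famV A k) (mul opw p q).
Proof. intros [Hp HP] [Hq HQ]. split; [apply UF_mul; assumption|]. intros P [hP| ->].
  - apply (FS_mul A k); try assumption. intros; apply HP; left; assumption.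
  - apply (mul_in opw p q _ isV (fun f g => True)); try assumption.
    + apply HP; right; reflexivity.
    + intros f _. apply UF_T, Hq.
    + intros f g hf hg. apply isV_opwl; assumption.
Qed.

Lemma dV_mul_r {T} (A : nat -> list T) k p q : Cl (FS A k) p -> Cl (famV A k) q -> Cl (famV A k) (mul opw p q).
Proof. intros [Hp HP] [Hq HQ]. split; [apply UF_mul; assumption|]. intros P [hP| ->].
  - apply (FS_mul A k); try assumption. intros; apply HQ; left; assumption.
  - apply (mul_in opw p q _ (fun _ => True) (fun f g => isV g /\ tl (ub f) g)); try assumption.
    + apply UF_T, Hp.
    + intros f _. apply UF_and; [exact Hq|apply HQ; right; reflexivity|apply HQ; left; right; eexists; reflexivity].
    + intros f g _ [hg ht]. apply isV_opwr; assumption.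
Qed.

Definition img {T : Type} (a : T) (q : (list (nat * option T) -> Prop) -> Prop) : (list (nat * option T) -> Prop) -> Prop :=
  fun P => q (fun f => P (sig a f)).

Lemma UF_img {T} (a : T) q : UF q -> UF (img a q).
Proof. intros (h1&h2&h3&h4&h5). unfold img. split; [|split; [|split; [|split]]].
  - exact h1.
  - exact h2.
  - intros P Q HP PQ. apply (h3 _ _ HP). intros x; apply PQ.
  - intros P Q HP HQ. apply (h4 _ _ HP HQ).
  - intros P. apply (h5 (fun f => P (sig a f))). Qed.

Lemma img_mul {T} (a : T) p q : img a (mul opw p q) = mul opw (img a p) (img a q).
Proof. unfold img, mul. extensionality P. f_equal. extensionality f. f_equal. extensionality g. rewrite sig_opw. reflexivity. Qed.

Lemma img_fix {T} (A : nat -> list T) k (a : T) p : Cl (famC A k) p -> img a p = p.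
Proof. intros [Hp HP]. apply UF_ext; [apply UF_img, Hp|exact Hp|]. intros P h. unfold img in h.
  apply (UF_mono p (fun f => P (sig a f) /\ isC f)); [exact Hp|apply UF_and; [exact Hp|exact h|apply HP; right; reflexivity]|].
  intros f [h1 h2]. rewrite sig_C in h1; assumption. Qed.

Lemma img_dC {T} (A : nat -> list T) (hA : alphabet_seq A) k (a : T) q : inA A a -> Cl (FS A k) q -> Cl (famC A k) (img a q).
Proof. intros [j ha] [Hq HQ]. split; [apply UF_img, Hq|]. unfold img. intros P [[->|[n ->]]| ->].
  - apply (UF_mono q (fun f => valid A k f /\ tl j f)); [exact Hq|apply UF_and; [exact Hq|apply HQ; left; reflexivity|apply HQ; right; eexists; reflexivity]|].
    intros f [h1 h2]. apply (valid_sig A hA k j); assumption.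
  - apply (UF_mono q (tl n)); [exact Hq|apply HQ; right; eexists; reflexivity|]. intros f h; apply tl_sig, h.
  - apply (UF_mono q (fun _ => True)); [exact Hq|apply UF_T, Hq|]. intros f _; apply isC_sig.
Qed.

Lemma dV_ne {T} (A : nat -> list T) k : exists v, Cl (famV A k) v.
Proof.
destruct (ultra_lemma (famV A k)) as [v [Hv Hv2]].
- intros l Hl.
  assert (exists N0, forall N, N0 <= N -> forall P, In P l -> P [(N, @None T)]) as [N0 HN].
  { induction l as [|P l IH].
    - exists 0. intros N _ P [].
    - destruct (IH (fun Q hQ => Hl Q (or_intror hQ))) as [N0 HN].
      destruct (Hl P (or_introl eq_refl)) as [[->|[n ->]]| ->].
      + exists N0. intros N hN Q [<-|hQ]; [|apply HN; assumption].
        split; [discriminate|split; [constructor; constructor|constructor; [exact I|constructor]]].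
      + exists (Nat.max N0 n). intros N hN Q [<-|hQ]; [|apply HN; [lia|assumption]].
        constructor; [simpl; lia|constructor].
      + exists N0. intros N hN Q [<-|hQ]; [|apply HN; assumption].
        exists (N, None); split; [left; reflexivity|reflexivity]. }
  exists [(N0, None)]. apply HN. lia.
- exists v. split; assumption.
Qed.

Lemma exists_pq {T} (A : nat -> list T) (hA : alphabet_seq A) k :
  exists p q, Cl (famC A k) p /\ mul opw p p = p /\ Cl (famV A k) q /\ forall a, inA A a -> img a q = p.
Proof.
assert (SC : forall r, Cl (famC A k) r -> Cl (FS A k) r).
{ intros r [h1 h2]. split; [exact h1|]. intros P hP; apply h2; left; exact hP. }
assert (SV : forall r, Cl (famV A k) r -> Cl (FS A k) r).
{ intros r [h1 h2]. split; [exact h1|]. intros P hP; apply h2; left; exact hP. }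
destruct (dV_ne A k) as [v Hv].
assert (a0 : exists a0, In a0 (A 0)).
{ destruct (A 0) as [|a0 l] eqn:E; [exfalso; apply (proj1 hA 0), E|exists a0; left; reflexivity]. }
destruct a0 as [a0 ha0].
destruct (min_idem opw (@opw_assoc T) (Cl (famC A k))) as [p [Cp [pp pmin]]].
- apply closed_Cl.
- exists (img a0 v). apply img_dC; [exact hA|exists 0; exact ha0|apply SV, Hv].
- intros x y; apply dC_mul.
- destruct (below opw (@opw_assoc T) (Cl (FS A k)) (Cl (famV A k)) p) as [q [Vq [qq [pq qp]]]].
  + apply closed_Cl.
  + apply closed_Cl.
  + apply SC, Cp.
  + exact pp.
  + intros x y; apply dS_mul.
  + intros x y; apply dV_mul_r.
  + intros x y; apply dV_mul_l.
  + exact SV.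
  + exists v; exact Hv.
  + exists p, q. split; [exact Cp|split; [exact pp|split; [exact Vq|]]].
    intros a ha. apply pmin.
    * apply img_dC; [exact hA|exact ha|apply SV, Vq].
    * rewrite <- img_mul, qq. reflexivity.
    * rewrite -{1}(img_fix A k a p Cp). rewrite <- img_mul, pq. reflexivity.
    * rewrite -{1}(img_fix A k a p Cp). rewrite <- img_mul, qp. reflexivity.
Qed.

Definition Bstar {T : Type} (p : (list (nat * option T) -> Prop) -> Prop) (B : list (nat * option T) -> Prop) f : Prop :=
  B f /\ p (fun g => B (opw f g)).

Definition Pn {T : Type} (A : nat -> list T) k p B (n : nat) (G : list (list (nat * option T))) (m : nat) f : Prop :=
  valid A k f /\ isV f /\ tl m f /\
  forall a, In a (A (k + n)) -> Bstar p B (sig a f) /\ forall g, In g G -> Bstar p B (opw g (sig a f)).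

Definition ch {T : Type} (A : nat -> list T) k p B n G m : list (nat * option T) :=
  epsilon (inhabits []) (Pn A k p B n G m).

Definition newc {T : Type} (A : nat -> list T) k n (G : list (list (nat * option T))) f :=
  map (fun a => sig a f) (A (k + n)) ++ flat_map (fun g => map (fun a => opw g (sig a f)) (A (k + n))) G.

Fixpoint st {T : Type} (A : nat -> list T) k p B (n : nat) : list (list (nat * option T)) * nat :=
  match n with
  | 0 => ([], 0)
  | S n => (fst (st A k p B n) ++ newc A k n (fst (st A k p B n)) (ch A k p B n (fst (st A k p B n)) (snd (st A k p B n))),
            ub (ch A k p B n (fst (st A k p B n)) (snd (st A k p B n))))
  end.

Definition fsq {T : Type} (A : nat -> list T) k p B n := ch A k p B n (fst (st A k p B n)) (snd (st A k p B n)).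

Lemma pstar {X} (op : X -> X -> X) p (B : X -> Prop) : UF p -> mul op p p = p -> p B -> p (fun f => B f /\ p (fun g => B (op f g))).
Proof. intros Hp pp HB. apply (UF_and p); [exact Hp|exact HB|]. rewrite <- pp in HB. exact HB. Qed.

Lemma star_shift {X} (op : X -> X -> X) (Hass : forall a b c, op (op a b) c = op a (op b c)) p (B : X -> Prop) f :
  UF p -> mul op p p = p -> p (fun g => B (op f g)) -> p (fun g => B (op f g) /\ p (fun h => B (op (op f g) h))).
Proof. intros Hp pp H. pose proof (pstar op p (fun g => B (op f g)) Hp pp H) as H2.
  apply (UF_mono p _ _ Hp H2). intros g [h1 h2]. split; [exact h1|]. apply (UF_mono p _ _ Hp h2). intros h hh. rewrite Hass. exact hh. Qed.

Lemma tl_ub {T} m (f : list (nat * option T)) : f <> [] -> tl m f -> m < ub f.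
Proof. intros hn ht. destruct f as [|x f]; [contradiction|]. inversion ht; subst. rewrite ub_cons. lia. Qed.

Lemma tl_mono {T} m m' (f : list (nat * option T)) : m' <= m -> tl m f -> tl m' f.
Proof. intros h ht. eapply Forall_impl; [|exact ht]. intros x hx; simpl in *; lia. Qed.

Lemma build {T} (A : nat -> list T) (hA : alphabet_seq A) k p q (B : list (nat * option T) -> Prop) :
  Cl (famC A k) p -> mul opw p p = p -> Cl (famV A k) q -> (forall a, inA A a -> img a q = p) -> p B ->
  exists (fs : nat -> list (nat * option T)) (m : nat -> nat),
    m 0 = 0 /\ (forall n, valid A k (fs n) /\ isV (fs n) /\ tl (m n) (fs n) /\ m (S n) = ub (fs n)) /\
    forall ls : list (nat * T), ls <> [] -> StronglySorted (fun x y => fst x < fst y) ls ->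
      Forall (fun pr => In (snd pr) (A (k + fst pr))) ls ->
      B (concat (map (fun pr => sig (snd pr) (fs (fst pr))) ls)).
Proof.
intros [Hp HP] pp [Hq HQ] Himg HB.
assert (Hex : forall n G m, (forall g, In g G -> Bstar p B g) -> exists f, Pn A k p B n G m f).
{ intros n G m HG.
  set (D := fun g => Bstar p B g /\ forall g', In g' G -> Bstar p B (opw g' g)).
  assert (pD : p D).
  { apply (UF_and p); [exact Hp|apply (pstar opw p B Hp pp HB)|].
    apply (UF_list p G (fun g' g => Bstar p B (opw g' g))); [exact Hp|].
    intros g' hg'. apply (star_shift opw (@opw_assoc T) p B g' Hp pp). apply (HG g' hg'). }
  assert (qX : q (fun f => valid A k f /\ (isV f /\ (tl m f /\ forall a, In a (A (k + n)) -> D (sig a f))))).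
  { apply (UF_and q); [exact Hq|apply HQ; left; left; reflexivity|].
    apply (UF_and q); [exact Hq|apply HQ; right; reflexivity|].
    apply (UF_and q); [exact Hq|apply HQ; left; right; eexists; reflexivity|].
    apply (UF_list q (A (k + n)) (fun a f => D (sig a f))); [exact Hq|].
    intros a ha. change (img a q D). rewrite Himg; [exact pD|exists (k + n); exact ha]. }
  destruct (UF_ne q _ Hq qX) as [f (h1&h2&h3&h4)]. exists f. split; [exact h1|split; [exact h2|split; [exact h3|]]].
  intros a ha. exact (h4 a ha). }
assert (Inv : forall n, (forall g, In g (fst (st A k p B n)) -> Bstar p B g /\ ub g <= snd (st A k p B n)) /\ n <= snd (st A k p B n)
   /\ Pn A k p B n (fst (st A k p B n)) (snd (st A k p B n)) (fsq A k p B n)).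
{ induction n as [|n IH].
  - assert (I0 : (forall g, In g (fst (st A k p B 0)) -> Bstar p B g /\ ub g <= snd (st A k p B 0)) /\ 0 <= snd (st A k p B 0)).
    { split; [intros g []|simpl; lia]. }
    split; [exact (proj1 I0)|split; [exact (proj2 I0)|]].
    unfold fsq, ch. apply epsilon_spec. apply Hex. intros g []. 
  - destruct IH as [IG [In_ Pf]].
    set (G := fst (st A k p B n)) in *. set (m := snd (st A k p B n)) in *. set (f := fsq A k p B n) in *.
    destruct Pf as (v & iV & tlf & Hf).
    assert (mf : m < ub f) by (apply tl_ub; [exact (proj1 v)|exact tlf]).
    assert (E1 : fst (st A k p B (S n)) = G ++ newc A k n G f) by reflexivity.
    assert (E2 : snd (st A k p B (S n)) = ub f) by reflexivity.
    assert (I1 : forall g, In g (fst (st A k p B (S n))) -> Bstar p B g /\ ub g <= snd (st A k p B (S n))).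
    { rewrite E1 E2. intros g hg. apply in_app_or in hg as [hg|hg].
      - destruct (IG g hg) as [a b]. split; [exact a|lia].
      - unfold newc in hg. apply in_app_or in hg as [hg|hg].
        + apply in_map_iff in hg as [a [<- ha]]. split; [apply (Hf a ha)|rewrite ub_sig; lia].
        + apply in_flat_map in hg as [g' [hg' hg]]. apply in_map_iff in hg as [a [<- ha]].
          split; [apply (Hf a ha), hg'|]. unfold opw. rewrite ub_app.
          pose proof (ub_filter_le (ub g') (sig a f)). rewrite ub_sig in H. destruct (IG g' hg') as [_ u]. lia. }
    assert (I2 : S n <= snd (st A k p B (S n))) by (rewrite E2; lia).
    split; [exact I1|split; [exact I2|]].
    unfold fsq, ch. apply epsilon_spec. apply Hex. intros g hg. apply (I1 g hg). }
assert (Mono : forall n N g, n <= N -> In g (fst (st A k p B n)) -> In g (fst (st A k p B N))).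
{ intros n N g h. induction h as [|N h IH]; [auto|]. intros hg. change (In g (fst (st A k p B N) ++ newc A k N (fst (st A k p B N)) (fsq A k p B N))).
  apply in_or_app; left; apply IH, hg. }
exists (fsq A k p B), (fun n => snd (st A k p B n)). split; [reflexivity|split].
{ intros n. destruct (Inv n) as [_ [_ (v & iV & tlf & _)]]. split; [exact v|split; [exact iV|split; [exact tlf|reflexivity]]]. }
set (Gf := fun ls : list (nat * T) => concat (map (fun pr => sig (snd pr) (fsq A k p B (fst pr))) ls)).
assert (Claim : forall ls, ls <> [] -> StronglySorted (fun x y => fst x < fst y) ls ->
      Forall (fun pr => In (snd pr) (A (k + fst pr))) ls -> forall N, (forall pr, In pr ls -> fst pr < N) ->
      In (Gf ls) (fst (st A k p B N))).
{ intros ls. induction ls as [|x ls' IH] using rev_ind; intros hne hs hl N hN; [contradiction|].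
  apply SS_app_inv in hs as [s1 [_ s3]].
  apply Forall_app in hl as [l1 l2]. inversion l2 as [|? ? hx _]; subst.
  destruct x as [l a]. simpl in hx.
  assert (lN : l < N) by (apply (hN (l, a)), in_or_app; right; left; reflexivity).
  assert (EG : Gf (ls' ++ [(l, a)]) = Gf ls' ++ sig a (fsq A k p B l)).
  { unfold Gf. rewrite map_app concat_app. simpl. rewrite app_nil_r. reflexivity. }
  rewrite EG. apply (Mono (S l)); [lia|]. change (In (Gf ls' ++ sig a (fsq A k p B l)) (fst (st A k p B l) ++ newc A k l (fst (st A k p B l)) (fsq A k p B l))).
  apply in_or_app; right. unfold newc. apply in_or_app.
  destruct ls' as [|y ls''].
  - left. simpl. apply in_map_iff. exists a; split; [reflexivity|exact hx].
  - right. apply in_flat_map. exists (Gf (y :: ls'')). split.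
    + apply IH; [discriminate|exact s1|exact l1|]. intros pr hpr. apply (s3 pr (l, a) hpr); left; reflexivity.
    + apply in_map_iff. exists a. split; [|exact hx]. apply opw_tl.
      destruct (Inv l) as [IG [_ (_ & _ & tlf & _)]].
      assert (hin : In (Gf (y :: ls'')) (fst (st A k p B l))).
      { apply IH; [discriminate|exact s1|exact l1|]. intros pr hpr. apply (s3 pr (l, a) hpr); left; reflexivity. }
      destruct (IG _ hin) as [_ u]. apply tl_sig. eapply tl_mono; [exact u|exact tlf]. }
intros ls hne hs hl.
assert (exists N, forall pr, In pr ls -> fst pr < N) as [N hN].
{ clear. induction ls as [|x ls IH]; [exists 0; intros ? []|]. destruct IH as [N hN]. exists (Nat.max N (S (fst x))).
  intros pr [<-|h]; [lia|]. specialize (hN pr h); lia. }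
destruct (Inv N) as [IG _]. apply (IG _ (Claim ls hne hs hl N hN)).
Qed.

Definition W {T : Type} (s : nat -> list (option T)) (f : list (nat * option T)) : list (option T) :=
  concat (map (fun pr => vsubst (s (fst pr)) (snd pr)) f).

Lemma vsubst_csubst {T} (w : list (option T)) o (a : T) :
  map Some (csubst (vsubst w o) a) = vsubst w (Some (match o with None => a | Some b => b end)).
Proof. induction w as [|x w IH]; [reflexivity|]. simpl. unfold csubst, vsubst in *. simpl. rewrite IH.
  destruct x; [reflexivity|]. destruct o; reflexivity. Qed.

Lemma W_app {T} (s : nat -> list (option T)) f g : W s (f ++ g) = W s f ++ W s g.
Proof. unfold W. rewrite map_app concat_app. reflexivity. Qed.

Lemma W_sig {T} (s : nat -> list (option T)) (a : T) f : W s (sig a f) = map Some (csubst (W s f) a).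
Proof. induction f as [|x f IH]; [reflexivity|].
  change (W s (sig a (x :: f))) with (vsubst (s (fst x)) (Some (match snd x with None => a | Some b => b end)) ++ W s (sig a f)).
  change (W s (x :: f)) with (vsubst (s (fst x)) (snd x) ++ W s f).
  rewrite IH. unfold csubst. rewrite !map_app. f_equal. symmetry. apply vsubst_csubst. Qed.

Lemma W_G {T} (s : nat -> list (option T)) (fs : nat -> list (nat * option T)) (ls : list (nat * T)) :
  W s (concat (map (fun pr => sig (snd pr) (fs (fst pr))) ls)) =
  map Some (concat (map (fun pr => csubst (W s (fs (fst pr))) (snd pr)) ls)).
Proof. induction ls as [|x ls IH]; [reflexivity|]. simpl. rewrite W_app IH W_sig map_app. reflexivity. Qed.

Lemma map_Some_inj {T} (u v : list T) : map Some u = map Some v -> u = v.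
Proof. revert v; induction u as [|x u IH]; intros [|y v]; simpl; try discriminate; auto.
  intros h. injection h as h1 h2. subst. f_equal. apply IH, h2. Qed.

Lemma vword_of {T} (A : nat -> list T) k (s : nat -> list (option T)) (hs : is_vseq A s) f :
  valid A k f -> isV f -> is_vword A (W s f).
Proof.
intros (_ & _ & hl) [pr [hpr hN]]. split.
- unfold W. apply in_concat. exists (vsubst (s (fst pr)) (snd pr)). split.
  + apply in_map_iff. exists pr; split; [reflexivity|exact hpr].
  + rewrite hN. destruct (hs (fst pr)) as [hN' _]. unfold vsubst. apply in_map_iff. exists None; split; [reflexivity|exact hN'].
- intros a ha. unfold W in ha. apply in_concat in ha as [l [hl1 hl2]]. apply in_map_iff in hl1 as [x [<- hx]].
  unfold vsubst in hl2. apply in_map_iff in hl2 as [o [ho hin]]. destruct o as [b|].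
  + injection ho as <-. apply (proj2 (hs (fst x))), hin.
  + rewrite Forall_forall in hl. specialize (hl x hx). rewrite ho in hl. exists (k + fst x). exact hl.
Qed.

Lemma extr_of {T} (A : nat -> list T) k (s : nat -> list (option T)) (fs : nat -> list (nat * option T)) (m : nat -> nat) :
  m 0 = 0 -> (forall n, valid A k (fs n) /\ isV (fs n) /\ tl (m n) (fs n) /\ m (S n) = ub (fs n)) ->
  extracted A k (fun n => W s (fs n)) s.
Proof.
intros m0 Hfs l. exists m. split; [exact m0|split].
- intros i _. destruct (Hfs i) as ((hne&_&_) & _ & ht & e). rewrite e. apply tl_ub; assumption.
- intros i _. destruct (Hfs i) as ((hne&hss&hl) & hv & ht & e). exists (fs i). split; [|split; [|split]].
  + apply StronglySorted_Sorted, hss.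
  + rewrite Forall_forall. intros x hx. rewrite Forall_forall in hl. unfold tl in ht. rewrite Forall_forall in ht.
    split; [split; [apply ht, hx|rewrite e; apply in_ub, hx]|exact (hl x hx)].
  + exact hv.
  + reflexivity.
Qed.

Theorem corollary3p10 (T : Type) (A : nat -> list T) (hA : alphabet_seq A)
  (k : nat) (E : list T -> Prop) (hE : forall w, E w -> is_word A w)
  (s : nat -> list (option T)) (hs : is_vseq A s)
  (hlarge : k_large A k E s) :
  exists t : nat -> list (option T),
    is_vseq A t /\ extracted A k t s /\
    (forall w, cspan t (fun n => A (k + n)) (fun _ => True) w -> E w).
Proof.
destruct (exists_pq A hA k) as [p [q [Cp [pp [Vq Himg]]]]].
set (E' := fun f => exists w, E w /\ map Some w = W s f).
assert (conv : forall ls : list (nat * T), Sorted (fun p q => fst p < fst q) ls ->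
   Forall (fun p => True /\ In (snd p) (A (k + fst p))) ls ->
   StronglySorted (fun x y => fst x < fst y) ls /\ Forall (fun pr => In (snd pr) (A (k + fst pr))) ls).
{ intros ls h1 h2. split.
  - apply Sorted_StronglySorted; [intros x y z; lia|exact h1].
  - eapply Forall_impl; [|exact h2]. intros x [_ h]; exact h. }
destruct (UF_or p E' (proj1 Cp)) as [HB|HB].
- destruct (build A hA k p q E' Cp pp Vq Himg HB) as [fs [m [m0 [Hfs Hcomb]]]].
  exists (fun n => W s (fs n)). split; [|split].
  + intros n. destruct (Hfs n) as (v & iV & _). apply (vword_of A k s hs); assumption.
  + apply (extr_of A k s fs m m0 Hfs).
  + intros w [ls [hne [hs1 [hl ->]]]]. destruct (conv ls hs1 hl) as [c1 c2].
    destruct (Hcomb ls hne c1 c2) as [w' [Ew' ew']].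
    rewrite W_G in ew'. apply map_Some_inj in ew'. rewrite <- ew'. exact Ew'.
- destruct (build A hA k p q _ Cp pp Vq Himg HB) as [fs [m [m0 [Hfs Hcomb]]]].
  exfalso.
  destruct (hlarge (fun n => W s (fs n))) as [u [Eu [ls [hne [hs1 [hl eu]]]]]].
  + intros n. destruct (Hfs n) as (v & iV & _). apply (vword_of A k s hs); assumption.
  + apply (extr_of A k s fs m m0 Hfs).
  + destruct (conv ls hs1 hl) as [c1 c2].
    apply (Hcomb ls hne c1 c2). exists u. split; [exact Eu|]. rewrite W_G. rewrite eu. reflexivity.
Qed.
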